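(* Let $\mathcal{O}$ be an oriented matroid of rank $r$ on $E$, $f\in E$, $I=[e_1,\dots,e_k]$ ($k\le r$) an ordered set of independent elements (possibly $f\in I$), and $\mathcal{O}'=\mathcal{O}\cup p=\mathcal{O}[e_1^+,\dots,e_k^+]$. Let $X,Y$ be conformal cocircuits of $\mathcal{O}'$ with $X_p=Y_p\neq 0$ and $X\circ Y$ an edge of $\mathcal{O}'$, with $Y_f\neq 0$, and suppose the index $i$ of $X$ and the index $j$ of $Y$ with respect to $I$ satisfy $1\le i<j\le k$. Then $\mathrm{Dir}_{(\mathcal{O}',p,f)}(X,Y)=\mathrm{Dir}_{(\mathcal{O}',e_i,f)}(X,Y)=Y_f$.
   Context: Oriented matroid $\mathcal{O}$ of rank $r$ on finite $E$, given by its cocircuits (sign vectors in $\{+,-,0\}^E$). Notation: $z(X)$ zero set, $\operatorname{sep}(X,Y)=\{e:X_e=-Y_e\ne0\}$, $(X\circ Y)_e=X_e$ if $X_e\ne0$, else $Y_e$; conformal means $\operatorname{sep}=\emptyset$. An edge is a covector whose zero set is a flat of rank $r-2$; cocircuits $X\ne\pm Y$ are comodular if $X\circ Y$ is an edge. For comodular $X,Y$ and $e\in\operatorname{sep}(X,Y)$, cocircuit elimination of $e$ between $X$ and $Y$ yields the unique cocircuit $Z$ with $Z_e=0$ and $Z_h=(X\circ Y)_h$ for $h\notin\operatorname{sep}(X,Y)$. For an oriented matroid $\mathcal{Q}$ on ground set $E'$, distinct $a,b\in E'$ and comodular cocircuits $X,Y$ of $\mathcal{Q}$ with $X_a=Y_a\ne0$,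 let $Z$ be obtained by eliminating $a$ between $-X$ and $Y$ and set $\mathrm{Dir}_{(\mathcal{Q},a,b)}(X,Y)=Z_b$; if $X_a\ne0$ and $Y_a=0$ set $\mathrm{Dir}_{(\mathcal{Q},a,b)}(X,Y)=Y_b$, and if $X_a=0$, $Y_a\neq 0$ set it to $-X_b$. The index of a cocircuit $Y$ w.r.t. $I=[e_1,\dots,e_k]$ is the smallest $i$ with $Y_{e_i}\ne0$, or $k+1$ if none. The positive lexicographic extension $\mathcal{O}[e_1^+,\dots,e_k^+]=\mathcal{O}\cup p$ is the single-element extension with localization $\sigma(Y)=Y_{e_i}$ if the index $i$ of $Y$ is $\le k$, and $\sigma(Y)=0$ otherwise. *)

(* Defs.v *)
From Stdlib Require Import ClassicalEpsilon.
From HB Require Import structures.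
From mathcomp Require Import all_boot.

Set Implicit Arguments.
Unset Strict Implicit.
Unset Printing Implicit Defensive.

Inductive sgn := Sz | Sp | Sm.

Definition sgn_eqb (a b : sgn) : bool :=
  match a, b with Sz, Sz | Sp, Sp | Sm, Sm => true | _, _ => false end.

Lemma sgn_eqP : Equality.axiom sgn_eqb.
Proof. by case; case; constructor. Qed.

HB.instance Definition _ := hasDecEq.Build sgn sgn_eqP.

Definition sopp (s : sgn) : sgn :=
  match s with Sp => Sm | Sm => Sp | Sz => Sz end.

Section SignVectors.
Variable E : finType.
Local Notation svec := {ffun E -> sgn}.

Definition zerov : svec := [ffun _ => Sz].
Definition oppv (X : svec) : svec := [ffun e => sopp (X e)].
Definition compv (X Y : svec) : svec := [ffun e => if X e != Sz then X e else Y e].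
Definition zeroset (X : svec) : {set E} := [set e | X e == Sz].
Definition supp (X : svec) : {set E} := [set e | X e != Sz].
Definition sep (X Y : svec) : {set E} := [set e | (X e != Sz) && (X e == sopp (Y e))].
Definition conformal (X Y : svec) : Prop := sep X Y = set0.

Variable C : svec -> Prop.   (* the set of cocircuits *)

Definition is_OM : Prop :=
  [/\ ~ C zerov,
      (forall X, C X -> C (oppv X)),
      (forall X Y, C X -> C Y -> supp X \subset supp Y -> X = Y \/ X = oppv Y) &
      (forall X Y e, C X -> C Y -> X <> oppv Y -> e \in sep X Y ->
         exists Z, [/\ C Z, Z e = Sz &
           forall g, Z g != Sz -> Z g = X g \/ Z g = Y g])].

(* underlying matroid: bases = minimal sets meeting every cocircuit support *)
Definition spanning (S : {set E}) : Prop :=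
  forall X, C X -> exists2 e, e \in S & X e != Sz.
Definition basis (B : {set E}) : Prop :=
  spanning B /\ forall B' : {set E}, B' \proper B -> ~ spanning B'.
Definition indep (J : {set E}) : Prop := exists2 B, basis B & J \subset B.
Definition has_rank (A : {set E}) (n : nat) : Prop :=
  (exists J : {set E}, [/\ J \subset A, indep J & #|J| = n]) /\
  (forall J : {set E}, J \subset A -> indep J -> #|J| <= n).

Definition covector (W : svec) : Prop :=
  exists s : seq svec, (forall Z, Z \in s -> C Z) /\ W = foldr compv zerov s.

Definition is_edge (W : svec) : Prop :=
  covector W /\ exists n, has_rank setT n.+2 /\ has_rank (zeroset W) n.

(* cocircuit elimination of e between X and Y (for comodular X, Y) *)
Definition elim_result (X Y : svec) (e : E) (Z : svec) : Prop :=
  [/\ C Z, Z e = Sz & forall h, h \notin sep X Y -> Z h = compv X Y h].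
Definition elim (X Y : svec) (e : E) : svec :=
  epsilon (inhabits zerov) (elim_result X Y e).

Definition Dir (a b : E) (X Y : svec) : sgn :=
  if (X a != Sz) && (Y a == X a) then elim (oppv X) Y a b
  else if (X a != Sz) && (Y a == Sz) then Y b
  else if (X a == Sz) && (Y a != Sz) then sopp (X b)
  else Sz.

(* index of Y w.r.t. I = [e_1,...,e_k] (1-based; k+1 if none) *)
Definition sindex (I : seq E) (Y : svec) : nat :=
  (find (fun e => Y e != Sz) I).+1.

(* localization of the positive lexicographic extension O[e_1^+,...,e_k^+] *)
Definition lex_sigma (I : seq E) (Y : svec) : sgn :=
  if sindex I Y <= size I then nth Sz [seq Y e | e <- I] (sindex I Y).-1 else Sz.

End SignVectors.

Section Extension.
Variable E : finType.

(* new element p is None; Some e are the old elements *)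
Definition restr (Z : {ffun option E -> sgn}) : {ffun E -> sgn} :=
  [ffun e => Z (Some e)].
Definition extv (Y : {ffun E -> sgn}) (s : sgn) : {ffun option E -> sgn} :=
  [ffun o => match o with Some e => Y e | None => s end].

Definition deletion_cocirc (C' : {ffun option E -> sgn} -> Prop)
    (Y : {ffun E -> sgn}) : Prop :=
  [/\ Y <> zerov E, (exists2 Z, C' Z & restr Z = Y) &
      forall Z, C' Z -> restr Z <> zerov E -> ~ (supp (restr Z) \proper supp Y)].

Definition single_ext (C : {ffun E -> sgn} -> Prop)
    (C' : {ffun option E -> sgn} -> Prop) (sigma : {ffun E -> sgn} -> sgn) : Prop :=
  [/\ is_OM C',
      (forall Y, C Y <-> deletion_cocirc C' Y) &
      (forall Y, C Y -> C' (extv Y (sigma Y)))].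

End Extension.

(* Main.v *)
Require Import Defs.
From mathcomp Require Import all_boot.
From Stdlib Require Import ClassicalEpsilon Classical.

Set Implicit Arguments.
Unset Strict Implicit.
Unset Printing Implicit Defensive.

Section OM.
Variable T : finType.
Variable C : {ffun T -> sgn} -> Prop.
Hypothesis HOM : is_OM C.

Lemma supp_oppv (X : {ffun T -> sgn}) : supp (oppv X) = supp X.
Proof. apply/setP=> e; rewrite !inE ffunE; by case: (X e). Qed.

Lemma oppvK (X : {ffun T -> sgn}) : oppv (oppv X) = X.
Proof. apply/ffunP=> e; rewrite !ffunE; by case: (X e). Qed.

Lemma om_sub_eq X Y : C X -> C Y -> supp X \subset supp Y -> X = Y \/ X = oppv Y.
Proof. case: HOM => _ _ H3 _. exact: H3. Qed.

Lemma om_sub X Y : C X -> C Y -> supp X \subset supp Y -> supp X = supp Y.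
Proof. move=> cX cY s. by case: (om_sub_eq cX cY s) => ->; rewrite ?supp_oppv. Qed.

Lemma wse P Q x : C P -> C Q -> supp P != supp Q -> x \in supp P -> x \in supp Q ->
  exists R, [/\ C R, R x = Sz & supp R \subset supp P :|: supp Q].
Proof.
move=> cP cQ neq xP xQ. case: HOM => _ H2 _ H4.
have gen : forall Q', C Q' -> supp Q' = supp Q -> P <> oppv Q' -> x \in sep P Q' ->
   exists R, [/\ C R, R x = Sz & supp R \subset supp P :|: supp Q].
  move=> Q' cQ' sQ' nPQ xs. have [Z [cZ Zx HZ]] := H4 P Q' x cP cQ' nPQ xs.
  exists Z; split=> //. apply/subsetP=> g; rewrite inE => Zg; rewrite inE -sQ' !inE.
  case: (HZ g Zg) => <-; by rewrite Zg ?orbT.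
case Hs: (P x == sopp (Q x)).
  apply: (gen Q) => //.
    move=> E; move: neq; by rewrite E supp_oppv eqxx.
  by rewrite inE Hs andbT; rewrite inE in xP.
apply: (gen (oppv Q)); first exact: H2.
- exact: supp_oppv.
- rewrite oppvK => E; move: neq; by rewrite E eqxx.
- rewrite inE ffunE; move: xP xQ Hs; rewrite !inE; by case: (P x); case: (Q x).
Qed.

Lemma card_lt_helper (A B : {set T}) y n : A \subset B -> y \in B -> y \notin A ->
  #|B| <= n.+1 -> #|A| <= n.
Proof.
move=> sAB yB yA hB. have : A \subset B :\ y.
  apply/subsetP=> z zA; rewrite !inE (subsetP sAB _ zA) andbT; apply/eqP=> E.
  by move: yA; rewrite -E zA.
move/subset_leq_card. move: hB; rewrite (cardsD1 y B) yB add1n ltnS.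
move=> h1 h2; exact: leq_trans h2 h1.
Qed.

Lemma sse_n n : forall P Q x y, #|supp P :|: supp Q| <= n -> C P -> C Q -> supp P != supp Q ->
  x \in supp P -> x \in supp Q -> y \in supp P -> y \notin supp Q ->
  exists R, [/\ C R, R x = Sz, R y != Sz & supp R \subset supp P :|: supp Q].
Proof.
elim: n => [|n IH] P Q x y hn cP cQ neq xP xQ yP yQ.
  move: hn; rewrite leqn0 cards_eq0 => /eqP E0.
  have : x \in supp P :|: supp Q by rewrite inE xP.
  by rewrite E0 inE.
have [R3 [cR3 R3x sR3]] := wse cP cQ neq xP xQ.
case: (eqVneq (R3 y) Sz) => R3y; last first.
  by exists R3.
have nsub : ~~ (supp R3 \subset supp P).
  apply/negP => s. have E := om_sub cR3 cP s. by move: xP; rewrite -E inE R3x.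
have [g gR3 gP] : exists2 g, g \in supp R3 & g \notin supp P.
  by move/subsetPn: nsub => [g ? ?]; exists g.
have gQ : g \in supp Q.
  by move/subsetP: sR3 => /(_ g gR3); rewrite inE (negbTE gP).
have yR3 : y \notin supp R3 by rewrite inE R3y eqxx.
have xR3 : x \notin supp R3 by rewrite inE R3x eqxx.
have hc1 : #|supp Q :|: supp R3| <= n.
  apply: (card_lt_helper (y := y)) hn.
  - apply/subsetP=> z; rewrite inE => /orP [zz|zz]; first by rewrite inE zz orbT.
    exact: (subsetP sR3).
  - by rewrite inE yP.
  - by rewrite inE negb_or yQ yR3.
have neq2 : supp Q != supp R3.
  by apply/eqP=> E; move: xR3; rewrite -E xQ.
have [R4 [cR4 R4g R4x sR4]] := IH Q R3 g x hc1 cQ cR3 neq2 gQ gR3 xQ xR3.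
have yR4 : y \notin supp R4.
  apply/negP=> yy; move/subsetP: sR4 => /(_ y yy); by rewrite inE (negbTE yQ) (negbTE yR3).
have gR4 : g \notin supp R4 by rewrite inE R4g eqxx.
have sR4' : supp R4 \subset supp P :|: supp Q.
  apply/subsetP=> z /(subsetP sR4); rewrite inE => /orP [zz|zz]; first by rewrite inE zz orbT.
  exact: (subsetP sR3).
have hc2 : #|supp P :|: supp R4| <= n.
  apply: (card_lt_helper (y := g)) hn.
  - apply/subsetP=> z; rewrite inE => /orP [zz|zz]; first by rewrite inE zz.
    exact: (subsetP sR4').
  - by rewrite inE gQ orbT.
  - by rewrite inE negb_or gP gR4.
have xR4 : x \in supp R4 by rewrite inE.
have neq3 : supp P != supp R4.
  by apply/eqP=> E; move: yR4; rewrite -E yP.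
have [R5 [cR5 R5x R5y sR5]] := IH P R4 x y hc2 cP cR4 neq3 xP xR4 yP yR4.
exists R5; split=> //.
apply/subsetP=> z /(subsetP sR5); rewrite inE => /orP [zz|zz]; first by rewrite inE zz.
exact: (subsetP sR4').
Qed.

Lemma sse P Q x y : C P -> C Q -> supp P != supp Q ->
  x \in supp P -> x \in supp Q -> y \in supp P -> y \notin supp Q ->
  exists R, [/\ C R, R x = Sz, R y != Sz & supp R \subset supp P :|: supp Q].
Proof. exact: (@sse_n _ P Q x y (leqnn _)). Qed.

End OM.
Section K.
Variable T : finType.
Variable C : {ffun T -> sgn} -> Prop.
Hypothesis HOM : is_OM C.

Definition vanish (W : {ffun T -> sgn}) (F : {set T}) := forall h, h \in F -> W h = Sz.

Lemma vanish_sub (R P Q : {ffun T -> sgn}) h : supp R \subset supp P :|: supp Q ->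
  P h = Sz -> Q h = Sz -> R h = Sz.
Proof.
move=> s Ph Qh; apply/eqP; apply: contraT => Rh.
have : h \in supp R by rewrite inE.
by move/(subsetP s); rewrite !inE Ph Qh.
Qed.

Lemma Klem (F : {set T}) n : has_rank C setT n.+2 -> has_rank C F n ->
  forall P Q U g, C P -> C Q -> C U -> vanish P F -> vanish Q F -> vanish U F ->
  supp P != supp Q -> P g = Sz -> Q g = Sz -> U g != Sz -> False.
Proof.
move=> [_ hT] [[J [sJF [B bB sJB] cJ]] hF] P Q U g cP cQ cU fP fQ fU nPQ Pg Qg Ug.
have spB : spanning C B by case: bB.
have cB : #|B| <= n.+2 := hT B (subsetT B) (ex_intro2 _ _ B bB (subxx B)).
set A := B :\: J.
have cA : #|A| <= 2.
  move: cB; rewrite -(cardsID J B) (setIidPr sJB) cJ.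
  by rewrite -addn2 leq_add2l.
have AF : forall b, b \in A -> b \notin F.
  move=> b; rewrite inE => /andP [bJ bB'] ; apply/negP => bF.
  have : #|b |: J| <= n.
    apply: hF.
    - by apply/subsetP=> z; rewrite !inE => /orP [/eqP -> //| zJ]; exact: (subsetP sJF).
    - exists B => //. by apply/subsetP=> z; rewrite !inE => /orP [/eqP -> //| zJ]; exact: (subsetP sJB).
  by rewrite cardsU1 bJ cJ /= add1n ltnn.
have meet : forall W, C W -> vanish W F -> exists2 a, a \in A & W a != Sz.
  move=> W cW fW. have [e eB We] := spB W cW.
  exists e => //. rewrite inE eB andbT. apply/negP => eJ.
  by move: We; rewrite fW // (subsetP sJF).
have card3 : forall a b c, a \in A -> b \in A -> c \in A -> a != b -> a != c -> b != c -> False.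
  move=> a b c aA bA cA' ab ac bc.
  have : #|a |: (b |: [set c])| <= #|A|.
    apply: subset_leq_card; apply/subsetP=> z /setU1P [->//|/set2P [] ->//].
  rewrite !cardsU1 cards1 !inE negb_or ab ac bc /=.
  move=> h; have := leq_trans h cA; by [].
have vsub : forall R P Q, supp R \subset supp P :|: supp Q -> vanish P F -> vanish Q F -> vanish R F.
  move=> R P' Q' s vP vQ h hF'; exact: (vanish_sub s (vP h hF') (vQ h hF')).
have uniq : forall a W1 W2, a \in A -> C W1 -> C W2 -> vanish W1 F -> vanish W2 F ->
    W1 a = Sz -> W2 a = Sz -> supp W1 = supp W2.
  move=> a W1 W2 aA c1 c2 v1 v2 a1 a2. apply/eqP; apply: contraT => neq.
  have [b1 b1A W1b] := meet W1 c1 v1.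
  have [b2 b2A W2b] := meet W2 c2 v2.
  have ab1 : a != b1 by apply/eqP=> E; move: W1b; rewrite -E a1.
  have ab2 : a != b2 by apply/eqP=> E; move: W2b; rewrite -E a2.
  case: (eqVneq b1 b2) => [E|nb]; last by case: (card3 a b1 b2 aA b1A b2A ab1 ab2 nb).
  subst b2.
  have b11 : b1 \in supp W1 by rewrite inE.
  have b12 : b1 \in supp W2 by rewrite inE.
  have [R [cR Rb sR]] := wse HOM c1 c2 neq b11 b12.
  have [e eA Re] := meet R cR (vsub _ _ _ sR v1 v2).
  have ae : a != e by apply/eqP=> E; move: Re; rewrite -E (vanish_sub sR a1 a2).
  have be : b1 != e by apply/eqP=> E; move: Re; rewrite -E Rb.
  by case: (card3 a b1 e aA b1A eA ab1 ae be).
have [a aA Ua] := meet U cU fU.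
have getD : forall W, C W -> vanish W F -> W a != Sz -> W g = Sz ->
    exists D, [/\ C D, D a = Sz, D g != Sz & vanish D F].
  move=> W cW fW Wa Wg.
  have aU : a \in supp U by rewrite inE.
  have aW : a \in supp W by rewrite inE.
  have gU : g \in supp U by rewrite inE.
  have gW : g \notin supp W by rewrite inE Wg.
  have neq : supp U != supp W by apply/eqP=> E; move: gW; rewrite -E gU.
  have [D [cD Da Dg sD]] := sse HOM cU cW neq aU aW gU gW.
  exists D; split=> //; exact: vsub sD fU fW.
have nD : forall W D, C W -> C D -> vanish W F -> vanish D F -> W a = Sz -> D a = Sz ->
    W g = Sz -> D g != Sz -> False.
  move=> W D cW cD vW vD Wa Da Wg Dg.
  have E := uniq a W D aA cW cD vW vD Wa Da.
  have : g \in supp D by rewrite inE.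
  by rewrite -E inE Wg.
case: (eqVneq (P a) Sz) => Pa.
  case: (eqVneq (Q a) Sz) => Qa.
    by move: nPQ; rewrite (uniq a P Q aA cP cQ fP fQ Pa Qa) eqxx.
  have [D [cD Da Dg vD]] := getD Q cQ fQ Qa Qg.
  exact: (nD P D).
have [D [cD Da Dg vD]] := getD P cP fP Pa Pg.
case: (eqVneq (Q a) Sz) => Qa.
  exact: (nD Q D).
have aP : a \in supp P by rewrite inE.
have aQ : a \in supp Q by rewrite inE.
have [R [cR Ra sR]] := wse HOM cP cQ nPQ aP aQ.
exact: (nD R D cR cD (vsub _ _ _ sR fP fQ) vD Ra Da (vanish_sub sR Pg Qg) Dg).
Qed.

End K.
Lemma lex_lem (E : finType) (C : {ffun E -> sgn} -> Prop) C' sigma :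
  single_ext C C' sigma -> forall W, C' W -> W None != Sz -> restr W != zerov E ->
  C (restr W) /\ W None = sigma (restr W).
Proof.
move=> [OM' HC Hext] W cW Wp rW.
have cr : C (restr W).
  apply/HC; split; first by apply/eqP.
  - by exists W.
  - move=> W' cW' rW' Hp.
    have sub : supp W' \subset supp W.
      apply/subsetP=> [[e|]]; rewrite !inE // => He.
      move/properP: Hp => [/subsetP s _]. have := s e; rewrite !inE !ffunE; exact.
    case: (om_sub_eq OM' cW' cW sub) => EW; move: Hp; rewrite EW ?properE ?subxx //.
    have -> : restr (oppv W) = oppv (restr W) by apply/ffunP=> e; rewrite !ffunE.
    by rewrite supp_oppv subxx.
split=> //.
have ce := Hext _ cr.
set s := sigma (restr W) in ce *.
have [e He] : exists e, restr W e != Sz.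
  apply/existsP; apply: contraT; rewrite negb_exists => /forallP H.
  move: rW; have -> : restr W = zerov E by apply/ffunP=> e; rewrite [RHS]ffunE; move: (H e); rewrite negbK => /eqP.
  by rewrite eqxx.
case: (eqVneq s Sz) => Hs.
  have sub : supp (extv (restr W) s) \subset supp W.
    apply/subsetP=> [[e'|]]; rewrite !inE !ffunE //; by rewrite Hs.
  case: (om_sub_eq OM' ce cW sub) => EE; move/(congr1 (fun Z : {ffun option E -> sgn} => Z None)): EE; rewrite !ffunE Hs;
    by move: Wp; case: (W None).
have sub : supp W \subset supp (extv (restr W) s).
  apply/subsetP=> [[e'|]]; rewrite !inE !ffunE //.
case: (om_sub_eq OM' cW ce sub) => [-> | ]; first by rewrite ffunE.
move/(congr1 (fun Z : {ffun option E -> sgn} => Z (Some e))); rewrite !ffunE; move: He; rewrite ffunE.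
by case: (W (Some e)).
Qed.

Lemma idx_lem (E : finType) (I : seq E) (f : E) (W : {ffun E -> sgn}) k :
  k < size I -> (forall l, l < k -> W (nth f I l) = Sz) -> W (nth f I k) != Sz ->
  lex_sigma I W = W (nth f I k).
Proof.
move=> kI H0 Hk.
have fk : find (fun e => W e != Sz) I = k.
  case: (ltngtP (find (fun e => W e != Sz) I) k) => [h|h|->] //.
  - have : has (fun e => W e != Sz) I by rewrite has_find (ltn_trans h kI).
    move/(nth_find f). by rewrite H0.
  - by move: (before_find f h) => /= ; rewrite Hk.
rewrite /lex_sigma /sindex fk kI /= (nth_map f) //.
Qed.
Lemma zero_from (T : finType) (Z A B : {ffun T -> sgn}) h :
  (forall g, Z g != Sz -> Z g = A g \/ Z g = B g) -> A h = Sz -> B h = Sz -> Z h = Sz.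
Proof.
move=> H Ah Bh; apply/eqP; apply: contraT => Zh.
by case: (H h Zh) => E; move: Zh; rewrite E ?Ah ?Bh eqxx.
Qed.

Theorem lemma3p6 (E : finType) (C : {ffun E -> sgn} -> Prop) (r : nat)
    (f : E) (I : seq E) (C' : {ffun option E -> sgn} -> Prop)
    (X Y : {ffun option E -> sgn}) (i j : nat) :
  is_OM C -> has_rank C setT r ->
  uniq I -> indep C [set e in I] -> size I <= r ->
  single_ext C C' (lex_sigma I) ->
  C' X -> C' Y -> conformal X Y ->
  X None = Y None -> X None != Sz ->
  is_edge C' (compv X Y) ->
  Y (Some f) != Sz ->
  sindex I (restr X) = i -> sindex I (restr Y) = j ->
  1 <= i -> i < j -> j <= size I ->
  Dir C' None (Some f) X Y = Y (Some f) /\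
  Dir C' (Some (nth f I i.-1)) (Some f) X Y = Y (Some f).
Proof.
move=> OMC rkC uI indI szI Hse cX cY confXY XYp Xp [_ [n [rT rF]]] Yf iX jY i1 ij jI.
have OM' : is_OM C' by case: Hse.
have [_ H2 _ H4] := OM'.
rewrite /sindex in iX jY.
set kX := find (fun e => restr X e != Sz) I in iX.
set kY := find (fun e => restr Y e != Sz) I in jY.
subst i j. rewrite [kX.+1.-1]/=.
have kXY : kX < kY by [].
have kYs : kY < size I by [].
have kXs : kX < size I by apply: ltn_trans kXY kYs.
set ei := nth f I kX.
have XE : X (Some ei) != Sz.
  have : has (fun e => restr X e != Sz) I by rewrite has_find.
  by move/(nth_find f); rewrite ffunE.
have X0 : forall l, l < kX -> X (Some (nth f I l)) = Sz.
  move=> l hl; move: (before_find f hl); rewrite ffunE; by move/negbFE/eqP.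
have Y0 : forall l, l <= kX -> Y (Some (nth f I l)) = Sz.
  move=> l hl; move: (before_find f (leq_ltn_trans hl kXY)); rewrite ffunE; by move/negbFE/eqP.
have Yei : Y (Some ei) = Sz by apply: Y0.
split; last first.
  rewrite /Dir Yei; move: XE; by case: (X (Some ei)).
have rX : restr X != zerov E.
  apply/eqP=> EE; move/(congr1 (fun Z : {ffun E -> sgn} => Z ei)): EE; rewrite !ffunE => EE.
  by move: XE; rewrite EE.
have XpE : X None = X (Some ei).
  have [_ ->] := lex_lem Hse cX Xp rX.
  rewrite (idx_lem (f := f) kXs) ?ffunE //.
  by move=> l hl; rewrite ffunE X0.
set F := zeroset (compv X Y) in rF.
have inF : forall h, (h \in F) = (X h == Sz) && (Y h == Sz).
  move=> h; rewrite inE ffunE; by case: (X h); case: (Y h).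
have vX : vanish X F by move=> h; rewrite inF => /andP [/eqP ->].
have vY : vanish Y F by move=> h; rewrite inF => /andP [_ /eqP ->].
have K := Klem OM' rT rF.
have inSep : forall h, (h \in sep (oppv X) Y) = (X h != Sz) && (X h == Y h).
  move=> h; rewrite inE ffunE; by case: (X h); case: (Y h).
have conf : forall h, X h != Sz -> Y h != Sz -> X h = Y h.
  move=> h Xh Yh. have : h \notin sep X Y by rewrite confXY inE.
  rewrite inE; move: Xh Yh; by case: (X h); case: (Y h).
have Yp : Y None != Sz by rewrite -XYp.
rewrite /Dir Xp -XYp eqxx /=.
have E1 : exists Z, elim_result C' (oppv X) Y None Z.
  have nXY : oppv X <> oppv Y.
    move=> EE; move: XE; by rewrite -(oppvK X) EE oppvK Yei eqxx.
  have pS : None \in sep (oppv X) Y by rewrite inSep Xp XYp eqxx.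
  have [Z [cZ Zp HZ]] := H4 _ _ _ (H2 _ cX) cY nXY pS.
  exists Z; split => // h hS.
  have vZ : vanish Z F.
    move=> g; rewrite inF => /andP [/eqP Xg /eqP Yg].
    apply: (zero_from HZ) => //; by rewrite ffunE Xg.
  have sZY : supp Y != supp Z.
    apply/eqP=> EE; have : None \in supp Y by rewrite inE.
    by rewrite EE inE Zp.
  rewrite ffunE [oppv X h]ffunE.
  case: (eqVneq (X h) Sz) => Xh; case: (eqVneq (Y h) Sz) => Yh.
  - by rewrite Xh /= Yh; apply: (zero_from HZ) => //; rewrite ffunE Xh.
  - rewrite Xh /=. case: (eqVneq (Z h) Sz) => Zh.
      have sZX : supp X != supp Z.
        apply/eqP=> EE; have : None \in supp X by rewrite inE.
        by rewrite EE inE Zp.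
      by case: (K X Z Y h cX cZ cY vX vZ vY sZX Xh Zh Yh).
    case: (HZ h Zh) => [EE|->//]; by move: Zh; rewrite EE ffunE Xh.
  - have -> : (sopp (X h) != Sz) = true by move: Xh; case: (X h).
    case: (eqVneq (Z h) Sz) => Zh.
      by case: (K Y Z X h cY cZ cX vY vZ vX sZY Yh Zh Xh).
    case: (HZ h Zh) => [->|]; first by rewrite ffunE.
    by move=> EE; move: Zh; rewrite EE Yh eqxx.
  - by move: hS; rewrite inSep Xh (conf h Xh Yh) eqxx.
rewrite /elim; set Z := epsilon _ _.
have [cZ Zp HZ] : elim_result C' (oppv X) Y None Z := epsilon_spec _ _ E1.
have vZ : vanish Z F.
  move=> h; rewrite inF => /andP [/eqP Xh /eqP Yh].
  rewrite HZ; first by rewrite ffunE ffunE Xh /= Yh.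
  by rewrite inSep Xh.
have Zei : Z (Some ei) = sopp (X (Some ei)).
  rewrite HZ; first by rewrite !ffunE; move: XE; case: (X (Some ei)).
  by rewrite inSep Yei; move: XE; case: (X (Some ei)).
have Z0 : forall l, l < kX -> Z (Some (nth f I l)) = Sz.
  move=> l hl; rewrite HZ; first by rewrite !ffunE X0 //= Y0 // ltnW.
  by rewrite inSep X0.
have ZpN : Z None = Sz := Zp.
case: (eqVneq (X (Some f)) Sz) => Xf.
  rewrite HZ; first by rewrite !ffunE Xf.
  by rewrite inSep Xf.
have XYf := conf _ Xf Yf.
case: (eqVneq (Z (Some f)) Sz) => Zf.
  have ncZ : ~ C (restr Z).
    move=> cR. have [_ _ Hext] := Hse.
    have ce := Hext _ cR.
    have rZ0 : forall l, l < kX -> restr Z (nth f I l) = Sz by move=> l hl; rewrite ffunE Z0.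
    have Zei' : restr Z (nth f I kX) != Sz by rewrite ffunE Zei; move: XE; case: (X (Some ei)).
    move: ce; rewrite (idx_lem kXs rZ0 Zei') => ce.
    have sub : supp Z \subset supp (extv (restr Z) (restr Z (nth f I kX))).
      apply/subsetP=> [[e'|]]; rewrite !inE !ffunE //; by rewrite Zp.
    case: (om_sub_eq OM' cZ ce sub) => EE; move/(congr1 (fun W : {ffun option E -> sgn} => W None)): EE;
      rewrite !ffunE Zp; move: Zei'; rewrite ffunE; by case: (Z (Some (nth f I kX))).
  have [_ HC _] := Hse.
  have [W [cW rW Hp]] : exists W, [/\ C' W, restr W != zerov E & supp (restr W) \proper supp (restr Z)].
    apply: NNPP => nex; apply: ncZ; apply/HC; split.
    - move=> EE; move/(congr1 (fun W : {ffun E -> sgn} => W ei)): EE; rewrite !ffunE Zei.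
      by move: XE; case: (X (Some ei)).
    - by exists Z.
    - move=> W cW rW Hp; apply: nex; exists W; split=> //; exact/eqP.
  move/properP: Hp => [sWZ [e eZ eW]].
  have vW : vanish W F.
    move=> [h|] hF; last by move: hF; rewrite inF (negbTE Xp).
    have : h \notin supp (restr Z) by rewrite inE ffunE vZ.
    apply: contraNeq => Wh; apply: (subsetP sWZ); by rewrite inE ffunE.
  have sWZ' : supp W != supp Z.
    apply/eqP=> EE; move: eW; have : Some e \in supp Z by move: eZ; rewrite !inE ffunE.
    by rewrite -EE !inE ffunE => ->.
  have Wf : W (Some f) = Sz.
    apply/eqP; apply: contraT => Wf.
    have : f \in supp (restr Z) by apply: (subsetP sWZ); rewrite inE ffunE.
    by rewrite inE ffunE Zf.
  by case: (K W Z X (Some f) cW cZ cX vW vZ vX sWZ' Wf Zf Xf).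
case: (eqVneq (Z (Some f)) (Y (Some f))) => // ZYf.
have ZfE : Z (Some f) = sopp (Y (Some f)).
  by move: Zf ZYf Yf; case: (Z (Some f)); case: (Y (Some f)).
have fS : Some f \in sep Y Z by rewrite inE Yf ZfE; move: Yf; case: (Y (Some f)).
have nYZ : Y <> oppv Z.
  by move/(congr1 (fun W : {ffun option E -> sgn} => W None)); rewrite ffunE Zp; move: Yp; case: (Y None).
have [V [cV Vf HV]] := H4 _ _ _ cY cZ nYZ fS.
have vV : vanish V F by move=> h hF; apply: (zero_from HV); [exact: vY | exact: vZ].
have sYV : supp Y != supp V.
  apply/eqP=> EE; have : Some f \in supp Y by rewrite inE.
  by rewrite EE inE Vf.
have sZV : supp Z != supp V.
  apply/eqP=> EE; have : Some f \in supp Z by rewrite inE.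
  by rewrite EE inE Vf.
have Vei : V (Some ei) = sopp (X (Some ei)).
  case: (eqVneq (V (Some ei)) Sz) => Ve.
    by case: (K Y V X (Some ei) cY cV cX vY vV vX sYV Yei Ve XE).
  case: (HV _ Ve) => EE; last by rewrite EE Zei.
  by move: Ve; rewrite EE Yei.
have VpE : V None = X None.
  case: (eqVneq (V None) Sz) => Vp.
    by case: (K Z V X None cZ cV cX vZ vV vX sZV Zp Vp Xp).
  case: (HV _ Vp) => EE; first by rewrite EE XYp.
  by move: Vp; rewrite EE Zp.
have V0 : forall l, l < kX -> V (Some (nth f I l)) = Sz.
  move=> l hl; apply: (zero_from HV); [apply: Y0; exact: ltnW | exact: Z0].
have Vp : V None != Sz by rewrite VpE.
have rV : restr V != zerov E.
  apply/eqP=> EE; move/(congr1 (fun W : {ffun E -> sgn} => W ei)): EE; rewrite !ffunE Vei.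
  by move: XE; case: (X (Some ei)).
have [_ VL] := lex_lem Hse cV Vp rV.
move: VL; rewrite (idx_lem (f := f) kXs); last 2 first.
- by move=> l hl; rewrite ffunE V0.
- by rewrite ffunE Vei; move: XE; case: (X (Some ei)).
rewrite ffunE Vei VpE XpE.
by move: XE; case: (X (Some ei)).
Qed.
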